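(* Let $\mathcal{T}$ be an artin triangulated $R$-category and let $A\xrightarrow{s}B\xrightarrow{g}C\xrightarrow{\Psi}A[1]$ be a distinguished triangle that does not split (i.e. $\Psi\neq0$), such that $\mathrm{Hom}_\mathcal{T}(A,C)=\mathrm{Hom}_\mathcal{T}(A[1],C)=0$ and $C$ is indecomposable. Then there exists a non-split distinguished triangle $A'\to B'\to C\to A'[1]$ such that $A'$ is a direct summand of $A$ and $B'$ is an indecomposable direct summand of $B$.
   Context: Artin triangulated $R$-category: a triangulated category $\mathcal{T}$ with $R$ a commutative artinian ring, Hom-sets finitely generated $R$-modules, $R$-bilinear composition, $R$-linear shift functor $[1]$, and $\mathcal{T}$ Krull–Schmidt (every object is a finite direct sum of indecomposables with local endomorphism rings). A distinguished triangle $X\to Y\to Z\xrightarrow{h}X[1]$ splits if $h=0$. *)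

(* Defs.v *)
From HB Require Import structures.
From mathcomp Require Import all_boot all_algebra.
Set Implicit Arguments. Unset Strict Implicit. Unset Printing Implicit Defensive.
Import GRing.Theory.
Local Open Scope ring_scope.

Definition is_ideal (R : comPzRingType) (I : R -> Prop) : Prop :=
  I 0 /\ (forall x y, I x -> I y -> I (x + y)) /\ (forall a x, I x -> I (a * x)).

Definition artinian (R : comPzRingType) : Prop :=
  forall I : nat -> R -> Prop,
    (forall n, is_ideal (I n)) ->
    (forall n x, I n.+1 x -> I n x) ->
    exists N, forall n, (N <= n)%N -> forall x, I n x <-> I N x.

Record TriCatData (R : comPzRingType) := {
  Obj :> Type;
  Mor : Obj -> Obj -> lmodType R;
  comp : forall X Y Z : Obj, Mor Y Z -> Mor X Y -> Mor X Z;
  idm : forall X : Obj, Mor X X;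
  sh : Obj -> Obj;
  shm : forall X Y : Obj, Mor X Y -> Mor (sh X) (sh Y);
  dist : forall X Y Z : Obj, Mor X Y -> Mor Y Z -> Mor Z (sh X) -> Prop
    (* dist f g h : X -f-> Y -g-> Z -h-> X[1] is distinguished *)
}.
Arguments Mor {R C} : rename.
Arguments comp {R C X Y Z} : rename.
Arguments idm {R C} : rename.
Arguments sh {R C} : rename.
Arguments shm {R C X Y} : rename.
Arguments dist {R C X Y Z} : rename.

Notation "g \co f" := (comp g f) (at level 40, left associativity).

Section TriCatAx.
Variables (R : comPzRingType) (C : TriCatData R).

Definition cat_axioms : Prop :=
  (forall (W X Y Z : C) (h : Mor Y Z) (g : Mor X Y) (f : Mor W X),
      h \co (g \co f) = (h \co g) \co f) /\
  (forall (X Y : C) (f : Mor X Y), idm Y \co f = f) /\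
  (forall (X Y : C) (f : Mor X Y), f \co idm X = f) /\
  (forall (X Y Z : C) (a : R) (g g' : Mor Y Z) (f : Mor X Y),
      (a *: g + g') \co f = a *: (g \co f) + (g' \co f)) /\
  (forall (X Y Z : C) (a : R) (g : Mor Y Z) (f f' : Mor X Y),
      g \co (a *: f + f') = a *: (g \co f) + (g \co f')).

Definition is_zero (X : C) : Prop := idm X = 0.

Definition is_iso (X Y : C) (f : Mor X Y) : Prop :=
  exists g : Mor Y X, g \co f = idm X /\ f \co g = idm Y.

Definition biprod (X1 X2 X : C) (i1 : Mor X1 X) (i2 : Mor X2 X)
    (p1 : Mor X X1) (p2 : Mor X X2) : Prop :=
  p1 \co i1 = idm X1 /\ p2 \co i2 = idm X2 /\
  p1 \co i2 = 0 /\ p2 \co i1 = 0 /\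
  (i1 \co p1) + (i2 \co p2) = idm X.

Definition additive : Prop :=
  (exists Z : C, is_zero Z) /\
  (forall X1 X2 : C, exists (X : C) (i1 : Mor X1 X) (i2 : Mor X2 X)
      (p1 : Mor X X1) (p2 : Mor X X2), biprod i1 i2 p1 p2).

Definition direct_summand (A' A : C) : Prop :=
  exists (A'' : C) (i1 : Mor A' A) (i2 : Mor A'' A) (p1 : Mor A A') (p2 : Mor A A''),
    biprod i1 i2 p1 p2.

Definition indecomposable (X : C) : Prop :=
  ~ is_zero X /\
  forall (X1 X2 : C) (i1 : Mor X1 X) (i2 : Mor X2 X) (p1 : Mor X X1) (p2 : Mor X X2),
    biprod i1 i2 p1 p2 -> is_zero X1 \/ is_zero X2.

(* End(X) is a local ring: nonzero, and for every f, f or 1 - f is a unit *)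
Definition local_end (X : C) : Prop :=
  ~ is_zero X /\ forall f : Mor X X, is_iso f \/ is_iso (idm X - f).

(* [1] is an R-linear additive auto-equivalence *)
Definition shift_axioms : Prop :=
  (forall X : C, shm (idm X) = idm (sh X)) /\
  (forall (X Y Z : C) (g : Mor Y Z) (f : Mor X Y), shm (g \co f) = shm g \co shm f) /\
  (forall (X Y : C) (a : R) (f f' : Mor X Y), shm (a *: f + f') = a *: shm f + shm f') /\
  (forall (X Y : C) (f f' : Mor X Y), shm f = shm f' -> f = f') /\
  (forall (X Y : C) (g : Mor (sh X) (sh Y)), exists f : Mor X Y, shm f = g) /\
  (forall Y : C, exists (X : C) (u : Mor (sh X) Y), is_iso u).

Definition TR1 : Prop :=
  (forall (X Y Z X' Y' Z' : C) (f : Mor X Y) (g : Mor Y Z) (h : Mor Z (sh X))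
      (f' : Mor X' Y') (g' : Mor Y' Z') (h' : Mor Z' (sh X'))
      (a : Mor X X') (b : Mor Y Y') (c : Mor Z Z'),
      is_iso a -> is_iso b -> is_iso c ->
      b \co f = f' \co a -> c \co g = g' \co b -> shm a \co h = h' \co c ->
      dist f g h -> dist f' g' h') /\
  (forall (X Z : C), is_zero Z -> dist (idm X) (0 : Mor X Z) (0 : Mor Z (sh X))) /\
  (forall (X Y : C) (f : Mor X Y), exists (Z : C) (g : Mor Y Z) (h : Mor Z (sh X)),
      dist f g h).

Definition TR2 : Prop :=
  forall (X Y Z : C) (f : Mor X Y) (g : Mor Y Z) (h : Mor Z (sh X)),
    dist f g h <-> dist g h (- shm f).

Definition TR3 : Prop :=
  forall (X Y Z X' Y' Z' : C) (f : Mor X Y) (g : Mor Y Z) (h : Mor Z (sh X))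
      (f' : Mor X' Y') (g' : Mor Y' Z') (h' : Mor Z' (sh X'))
      (a : Mor X X') (b : Mor Y Y'),
    dist f g h -> dist f' g' h' -> b \co f = f' \co a ->
    exists c : Mor Z Z', c \co g = g' \co b /\ shm a \co h = h' \co c.

Definition TR4 : Prop :=
  forall (X Y Z Z' X' Y' : C) (f : Mor X Y) (g : Mor Y Z)
      (f1 : Mor Y Z') (f2 : Mor Z' (sh X))
      (g1 : Mor Z X') (g2 : Mor X' (sh Y))
      (h1 : Mor Z Y') (h2 : Mor Y' (sh X)),
    dist f f1 f2 -> dist g g1 g2 -> dist (g \co f) h1 h2 ->
    exists (u : Mor Z' Y') (v : Mor Y' X'),
      dist u v (shm f1 \co g2) /\
      u \co f1 = h1 \co g /\ h2 \co u = f2 /\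
      v \co h1 = g1 /\ shm f \co h2 = g2 \co v.

Definition hom_fin_gen : Prop :=
  forall X Y : C, exists (n : nat) (v : 'I_n -> Mor X Y),
    forall f : Mor X Y, exists c : 'I_n -> R, f = \sum_(i < n) c i *: v i.

Definition krull_schmidt : Prop :=
  forall X : C, exists (n : nat) (Xs : 'I_n -> C)
      (inj : forall k, Mor (Xs k) X) (prj : forall k, Mor X (Xs k)),
    (forall k, prj k \co inj k = idm (Xs k)) /\
    (forall k l, k != l -> prj l \co inj k = 0) /\
    \sum_(k < n) (inj k \co prj k) = idm X /\
    (forall k, indecomposable (Xs k) /\ local_end (Xs k)).

End TriCatAx.

Record ArtinTriCat (R : comPzRingType) := {
  atc_data :> TriCatData R;
  atc_artinian : artinian R;
  atc_cat : cat_axioms atc_data;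
  atc_additive : additive atc_data;
  atc_shift : shift_axioms atc_data;
  atc_TR1 : TR1 atc_data;
  atc_TR2 : TR2 atc_data;
  atc_TR3 : TR3 atc_data;
  atc_TR4 : TR4 atc_data;
  atc_fin : hom_fin_gen atc_data;
  atc_KS : krull_schmidt atc_data
}.

(* Main.v *)
Require Import Defs.
From HB Require Import structures.
From mathcomp Require Import all_boot all_algebra.
Import GRing.Theory.
Local Open Scope ring_scope.

Lemma compA' {R : comPzRingType} {T : ArtinTriCat R} {W X Y Z : T}
  (h : Mor Y Z) (g : Mor X Y) (f : Mor W X) : h \co (g \co f) = (h \co g) \co f.
Proof. by case: (atc_cat T). Qed.
Lemma id_l {R : comPzRingType} {T : ArtinTriCat R} {X Y : T} (f : Mor X Y) : idm Y \co f = f.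
Proof. by case: (atc_cat T) => _ []. Qed.
Lemma id_r {R : comPzRingType} {T : ArtinTriCat R} {X Y : T} (f : Mor X Y) : f \co idm X = f.
Proof. by case: (atc_cat T) => _ [] _ []. Qed.
Lemma linl {R : comPzRingType} {T : ArtinTriCat R} {X Y Z : T} a (g g' : Mor Y Z) (f : Mor X Y) :
  (a *: g + g') \co f = a *: (g \co f) + (g' \co f).
Proof. by case: (atc_cat T) => _ [] _ [] _ []. Qed.
Lemma linr {R : comPzRingType} {T : ArtinTriCat R} {X Y Z : T} a (g : Mor Y Z) (f f' : Mor X Y) :
  g \co (a *: f + f') = a *: (g \co f) + (g \co f').
Proof. by case: (atc_cat T) => _ [] _ [] _ []. Qed.

Lemma comp0l {R : comPzRingType} {T : ArtinTriCat R} {X Y Z : T} (f : Mor X Y) :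
  (0 : Mor Y Z) \co f = 0.
Proof.
have H := linl 1 (0 : Mor Y Z) 0 f.
rewrite !scale1r addr0 in H.
by apply: (addrI (0 \co f)); rewrite addr0 -H.
Qed.
Lemma comp0r {R : comPzRingType} {T : ArtinTriCat R} {X Y Z : T} (g : Mor Y Z) :
  g \co (0 : Mor X Y) = 0.
Proof.
have H := linr 1 g (0 : Mor X Y) 0.
rewrite !scale1r addr0 in H.
by apply: (addrI (g \co 0)); rewrite addr0 -H.
Qed.
Lemma compDl {R : comPzRingType} {T : ArtinTriCat R} {X Y Z : T} (g g' : Mor Y Z) (f : Mor X Y) :
  (g + g') \co f = g \co f + g' \co f.
Proof. by have := linl 1 g g' f; rewrite !scale1r. Qed.
Lemma compDr {R : comPzRingType} {T : ArtinTriCat R} {X Y Z : T} (g : Mor Y Z) (f f' : Mor X Y) :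
  g \co (f + f') = g \co f + g \co f'.
Proof. by have := linr 1 g f f'; rewrite !scale1r. Qed.
Lemma compNl {R : comPzRingType} {T : ArtinTriCat R} {X Y Z : T} (g : Mor Y Z) (f : Mor X Y) :
  (- g) \co f = - (g \co f).
Proof. by have := linl (-1) g 0 f; rewrite !scaleN1r comp0l !addr0. Qed.
Lemma compNr {R : comPzRingType} {T : ArtinTriCat R} {X Y Z : T} (g : Mor Y Z) (f : Mor X Y) :
  g \co (- f) = - (g \co f).
Proof. by have := linr (-1) g f 0; rewrite !scaleN1r comp0r !addr0. Qed.
Lemma compBl {R : comPzRingType} {T : ArtinTriCat R} {X Y Z : T} (g g' : Mor Y Z) (f : Mor X Y) :
  (g - g') \co f = g \co f - g' \co f.
Proof. by rewrite compDl compNl. Qed.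
Lemma compBr {R : comPzRingType} {T : ArtinTriCat R} {X Y Z : T} (g : Mor Y Z) (f f' : Mor X Y) :
  g \co (f - f') = g \co f - g \co f'.
Proof. by rewrite compDr compNr. Qed.

Lemma shm_id {R : comPzRingType} {T : ArtinTriCat R} {X : T} : shm (idm X) = idm (sh X).
Proof. by case: (atc_shift T). Qed.
Lemma shm_comp {R : comPzRingType} {T : ArtinTriCat R} {X Y Z : T} (g : Mor Y Z) (f : Mor X Y) :
  shm (g \co f) = shm g \co shm f.
Proof. by case: (atc_shift T) => _ []. Qed.
Lemma shm_lin {R : comPzRingType} {T : ArtinTriCat R} {X Y : T} a (f f' : Mor X Y) :
  shm (a *: f + f') = a *: shm f + shm f'.
Proof. by case: (atc_shift T) => _ [] _ []. Qed.
Lemma shm_inj {R : comPzRingType} {T : ArtinTriCat R} {X Y : T} (f f' : Mor X Y) :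
  shm f = shm f' -> f = f'.
Proof. by case: (atc_shift T) => _ [] _ [] _ [] H _; apply: H. Qed.
Lemma shm_full {R : comPzRingType} {T : ArtinTriCat R} {X Y : T} (g : Mor (sh X) (sh Y)) :
  exists f : Mor X Y, shm f = g.
Proof. by case: (atc_shift T) => _ [] _ [] _ [] _ [] H _; apply: H. Qed.
Lemma sh_ess {R : comPzRingType} {T : ArtinTriCat R} {Y : T} :
  exists (X : T) (u : Mor (sh X) Y), is_iso u.
Proof. by case: (atc_shift T) => _ [] _ [] _ [] _ [] _ H; apply: H. Qed.
Lemma shm0 {R : comPzRingType} {T : ArtinTriCat R} {X Y : T} : shm (0 : Mor X Y) = 0.
Proof.
have H := shm_lin 1 (0 : Mor X Y) 0.
rewrite !scale1r addr0 in H.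
by apply: (addrI (shm (0 : Mor X Y))); rewrite addr0 -H.
Qed.
Lemma shmN {R : comPzRingType} {T : ArtinTriCat R} {X Y : T} (f : Mor X Y) : shm (- f) = - shm f.
Proof. by have := shm_lin (-1) f 0; rewrite !scaleN1r shm0 !addr0. Qed.
Lemma shmB {R : comPzRingType} {T : ArtinTriCat R} {X Y : T} (f f' : Mor X Y) : shm (f - f') = shm f - shm f'.
Proof. by have := shm_lin 1 f (- f'); rewrite !scale1r shmN. Qed.

Lemma dist_iso {R : comPzRingType} {T : ArtinTriCat R} {X Y Z X' Y' Z' : T} (f : Mor X Y) (g : Mor Y Z) (h : Mor Z (sh X))
      (f' : Mor X' Y') (g' : Mor Y' Z') (h' : Mor Z' (sh X'))
      (a : Mor X X') (b : Mor Y Y') (c : Mor Z Z') :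
      is_iso a -> is_iso b -> is_iso c ->
      b \co f = f' \co a -> c \co g = g' \co b -> shm a \co h = h' \co c ->
      dist f g h -> dist f' g' h'.
Proof. case: (atc_TR1 T) => H _; exact: H. Qed.
Lemma dist_triv {R : comPzRingType} {T : ArtinTriCat R} (X Z : T) :
  is_zero Z -> dist (idm X) (0 : Mor X Z) (0 : Mor Z (sh X)).
Proof. case: (atc_TR1 T) => _ [H _]; exact: H. Qed.
Lemma dist_ex {R : comPzRingType} {T : ArtinTriCat R} {X Y : T} (f : Mor X Y) :
  exists (Z : T) (g : Mor Y Z) (h : Mor Z (sh X)), dist f g h.
Proof. case: (atc_TR1 T) => _ [_ H]; exact: H. Qed.
Lemma rot {R : comPzRingType} {T : ArtinTriCat R} {X Y Z : T} (f : Mor X Y) (g : Mor Y Z) (h : Mor Z (sh X)) :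
  dist f g h <-> dist g h (- shm f).
Proof. exact: atc_TR2. Qed.
Lemma tr3 {R : comPzRingType} {T : ArtinTriCat R} {X Y Z X' Y' Z' : T} (f : Mor X Y) (g : Mor Y Z) (h : Mor Z (sh X))
      (f' : Mor X' Y') (g' : Mor Y' Z') (h' : Mor Z' (sh X'))
      (a : Mor X X') (b : Mor Y Y') :
    dist f g h -> dist f' g' h' -> b \co f = f' \co a ->
    exists c : Mor Z Z', c \co g = g' \co b /\ shm a \co h = h' \co c.
Proof. exact: atc_TR3. Qed.
Lemma zero_obj {R : comPzRingType} (T : ArtinTriCat R) : exists Z : T, is_zero Z.
Proof. by case: (atc_additive T). Qed.

Lemma iso_id {R : comPzRingType} {T : ArtinTriCat R} (X : T) : is_iso (idm X).
Proof. by exists (idm X); rewrite id_l. Qed.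

Lemma dist_trivQ {R : comPzRingType} {T : ArtinTriCat R} (W : T) :
  exists Q : T, dist (0 : Mor Q W) (idm W) (0 : Mor W (sh Q)).
Proof.
have [Z0 HZ] := zero_obj T.
have [Q [u [u' [H1 H2]]]] := sh_ess (Y := Z0).
exists Q; apply/rot; rewrite shm0 oppr0.
refine (dist_iso _ _ _ _ _ _ (idm W) (idm W) u' _ _ _ _ _ _ (dist_triv W Z0 HZ)).
- exact: iso_id.
- exact: iso_id.
- by exists u.
- by [].
- by rewrite ?comp0r ?comp0l.
- by rewrite ?comp0r ?comp0l.
Qed.

Lemma dist_comp0 {R : comPzRingType} {T : ArtinTriCat R} {X Y Z : T} {f : Mor X Y} {g : Mor Y Z} {h : Mor Z (sh X)} :
  dist f g h -> g \co f = 0.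
Proof.
move=> D.
have [Z0 HZ] := zero_obj T.
have [c [Hc _]] := tr3 _ _ _ _ _ _ (idm X) f (dist_triv X Z0 HZ) D (erefl _ : f \co idm X = f \co idm X).
by rewrite -Hc comp0r.
Qed.

Lemma fact_out {R : comPzRingType} {T : ArtinTriCat R} {X Y Z : T} {f : Mor X Y} {g : Mor Y Z} {h : Mor Z (sh X)}
  {W : T} {x : Mor Y W} : dist f g h -> x \co f = 0 -> exists y : Mor Z W, x = y \co g.
Proof.
move=> D Hx.
have [Q DQ] := dist_trivQ W.
have [c [Hc _]] := tr3 _ _ _ _ _ _ (0 : Mor X Q) x D DQ (etrans Hx (esym (comp0r _))).
by exists c; rewrite Hc id_l.
Qed.

Lemma fact_in {R : comPzRingType} {T : ArtinTriCat R} {X Y Z : T} {f : Mor X Y} {g : Mor Y Z} {h : Mor Z (sh X)}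
  {W : T} {x : Mor W Y} : dist f g h -> g \co x = 0 -> exists y : Mor W X, x = f \co y.
Proof.
move=> D Hx.
have [Z0 HZ] := zero_obj T.
have D0 := proj1 (rot _ _ _) (dist_triv W Z0 HZ).
have D1 := proj1 (rot _ _ _) D.
have [c [_ Hc]] := tr3 _ _ _ _ _ _ x (0 : Mor Z0 Z) D0 D1 (etrans (comp0l _) (esym Hx)).
have [y Hy] := shm_full c.
exists y; apply: shm_inj.
move: Hc; rewrite -Hy shm_id compNr compNl id_r shm_comp.
by move/oppr_inj.
Qed.

Lemma split_mono {R : comPzRingType} {T : ArtinTriCat R} {X Y Z : T} {u : Mor X Y} {d : Mor Y Z} {w : Mor Z (sh X)}
  {r : Mor Y X} : dist u d w -> r \co u = idm X -> exists sg : Mor Z Y, biprod u sg r d.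
Proof.
move=> D Hr.
have D1 := proj1 (rot _ _ _) D.
have D2 := proj1 (rot _ _ _) D1.
have du := dist_comp0 D.
have w0 : w = 0.
  have H := dist_comp0 D2.
  rewrite compNl in H; move/eqP: H; rewrite oppr_eq0 => /eqP H.
  by rewrite -(id_l w) -shm_id -Hr shm_comp -compA' H comp0r.
have [sg Hsg] : exists sg : Mor Z Y, idm Y - u \co r = sg \co d.
  apply: (fact_out D); by rewrite compBl id_l -compA' Hr id_r subrr.
have dsg : d \co sg = idm Z.
  have [y Hy] : exists y : Mor (sh X) Z, d \co sg - idm Z = y \co w.
    apply: (fact_out D1).
    by rewrite compBl -compA' -Hsg compBr id_r compA' du comp0l subr0 id_l subrr.
  by apply/eqP; rewrite -subr_eq0 Hy w0 comp0r.
have rsg : r \co sg = 0.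
  have [y Hy] : exists y : Mor (sh X) X, r \co sg = y \co w.
    apply: (fact_out D1).
    by rewrite -compA' -Hsg compBr id_r compA' Hr id_l subrr.
  by rewrite Hy w0 comp0r.
exists sg; split; [by [] | split; [by [] | split; [by [] | split; [by [] |]]]].
by rewrite -Hsg addrC subrK.
Qed.

Lemma iso_comp {R : comPzRingType} {T : ArtinTriCat R} {X Y Z : T} (g : Mor Y Z) (f : Mor X Y) :
  is_iso f -> is_iso g -> is_iso (g \co f).
Proof.
move=> [f' [H1 H2]] [g' [H3 H4]]; exists (f' \co g'); split.
- by rewrite -compA' (compA' g') H3 id_l.
- by rewrite -compA' (compA' f) H2 id_l.
Qed.

Lemma add_iso {R : comPzRingType} {T : ArtinTriCat R} {C : T}
  (Hloc : forall f : Mor C C, is_iso f \/ is_iso (idm C - f)) (a b : Mor C C) :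
  is_iso (a + b) -> is_iso a \/ is_iso b.
Proof.
move=> [v [H1 H2]].
have Hv : is_iso v by exists (a + b).
have Ea : a = (a \co v) \co (a + b) by rewrite -compA' H1 id_r.
have Eb : b = (b \co v) \co (a + b) by rewrite -compA' H1 id_r.
have Hab : (idm C - a \co v) = b \co v by rewrite -H2 compDl addrC addKr.
case: (Hloc (a \co v)) => H.
- by left; rewrite Ea; apply: iso_comp => //; exists v.
- by right; rewrite Eb; apply: iso_comp; [exists v | rewrite -Hab].
Qed.

Lemma local_sum {R : comPzRingType} {T : ArtinTriCat R} {C : T}
  (Hloc : forall f : Mor C C, is_iso f \/ is_iso (idm C - f)) (HC : idm C <> 0) :
  forall n (phi : 'I_n -> Mor C C), is_iso (\sum_(k < n) phi k) -> exists k, is_iso (phi k).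
Proof.
elim=> [|n IH] phi.
  rewrite big_ord0 => [[v [H1 _]]]; by case: HC; rewrite -H1 comp0r.
rewrite big_ord_recr /= => /(add_iso Hloc) [H|H].
- by have [k Hk] := IH _ H; exists (widen_ord (leqnSn n) k).
- by exists ord_max.
Qed.

Lemma comp_sumr {R : comPzRingType} {T : ArtinTriCat R} {X Y Z : T} (g : Mor Y Z) n (F : 'I_n -> Mor X Y) :
  g \co (\sum_(k < n) F k) = \sum_(k < n) (g \co F k).
Proof.
elim/big_rec2: _ => [|i y1 y2 _ <-]; first exact: comp0r.
by rewrite compDr.
Qed.
Lemma comp_suml {R : comPzRingType} {T : ArtinTriCat R} {X Y Z : T} (f : Mor X Y) n (F : 'I_n -> Mor Y Z) :
  (\sum_(k < n) F k) \co f = \sum_(k < n) (F k \co f).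
Proof.
elim/big_rec2: _ => [|i y1 y2 _ <-]; first exact: comp0l.
by rewrite compDl.
Qed.

Lemma loc_transport {R : comPzRingType} {T : ArtinTriCat R} {C X : T} (i : Mor X C) (p : Mor C X) :
  p \co i = idm X -> i \co p = idm C -> local_end X ->
  forall f : Mor C C, is_iso f \/ is_iso (idm C - f).
Proof.
move=> Hpi Hip [_ Hl] f.
have tr : forall F : Mor C C, is_iso (p \co F \co i) -> is_iso F.
  move=> F [t [H1 H2]]; exists (i \co t \co p); split.
  - have E : ((i \co t) \co p) \co (F \co (i \co p)) = i \co (t \co (p \co F \co i)) \co p by rewrite !compA'.
    by rewrite -(id_r F) -Hip E H1 id_r Hip.
  - have E : ((i \co p) \co F) \co ((i \co t) \co p) = i \co ((p \co F \co i) \co t) \co p by rewrite !compA'.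
    by rewrite -(id_l F) -Hip E H2 id_r Hip.
case: (Hl (p \co f \co i)) => H; [left; exact: tr | right; apply: tr].
by rewrite compBr id_r compBl Hpi.
Qed.

Theorem proposition3p5 (R : comPzRingType) (T : ArtinTriCat R) (A B C : T)
    (s : Mor A B) (g : Mor B C) (Psi : Mor C (sh A)) :
  dist s g Psi -> Psi <> 0 ->
  (forall f : Mor A C, f = 0) -> (forall f : Mor (sh A) C, f = 0) ->
  indecomposable C ->
  exists (A' B' : T) (s' : Mor A' B') (g' : Mor B' C) (Psi' : Mor C (sh A')),
    dist s' g' Psi' /\ Psi' <> 0 /\
    direct_summand A' A /\ direct_summand B' B /\ indecomposable B'.
Proof.
move=> D HPsi HAC HA1C HC.
have D1 := proj1 (rot _ _ _) D.
have Hloc : forall f : Mor C C, is_iso f \/ is_iso (idm C - f).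
  have [n [Xs [inj [prj [Hpi [_ [Hsum Hind]]]]]]] := @atc_KS _ T C.
  case: n Xs inj prj Hpi Hsum Hind => [|n] Xs inj prj Hpi Hsum Hind.
    by case: HC.1; rewrite /is_zero -Hsum big_ord0.
  have [K [dd [ww DK]]] := dist_ex (inj ord0).
  have [sg Hbp] := split_mono DK (Hpi ord0).
  case: (HC.2 _ _ _ _ _ _ Hbp) => Hz.
    by case: (Hind ord0) => _ [].
  have Hip : inj ord0 \co prj ord0 = idm C.
    case: Hbp => _ [_ [_ [_ E]]].
    by rewrite -E -(id_r sg) Hz comp0r comp0l addr0.
  exact: (loc_transport (inj ord0) (prj ord0) (Hpi ord0) Hip (Hind ord0).2).
have HCnz : idm C <> 0 by case: HC.
have [m [Bs [inB [prB [HpiB [_ [HsumB HindB]]]]]]] := @atc_KS _ T B.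
have : forall k : 'I_m, exists ph : Mor C C, g \co inB k \co prB k = ph \co g.
  move=> k; apply: (fact_out D); exact: HAC.
case/fin_all_exists => ph Hph.
have Hsum1 : \sum_(k < m) ph k = idm C.
  have E : (\sum_(k < m) ph k - idm C) \co g = 0.
    rewrite compBl id_l comp_suml.
    under eq_bigr => k _ do rewrite -Hph -compA'.
    by rewrite -comp_sumr HsumB id_r subrr.
  have [y Hy] := fact_out D1 E.
  by apply/eqP; rewrite -subr_eq0 Hy (HA1C y) comp0l.
have [k [psi [Hps1 Hps2]]] : exists k, is_iso (ph k).
  apply: (local_sum Hloc HCnz); rewrite Hsum1; exact: iso_id.
pose h := psi \co (g \co inB k).
have Hg : g = h \co prB k.
  by rewrite /h -compA' Hph compA' Hps1 id_l.
have Hh : g \co inB k = h by rewrite Hg -compA' HpiB id_r.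
have [Z [v [w Dh]]] := dist_ex h.
have [Ak [u [u' [Hu1 Hu2]]]] := sh_ess (Y := Z).
have Dh2 : dist h (u' \co v) (w \co u).
  apply: (dist_iso _ _ _ _ _ _ (idm _) (idm _) u' _ _ _ _ _ _ Dh).
  - exact: iso_id.
  - exact: iso_id.
  - by exists u.
  - by rewrite id_l id_r.
  - by rewrite id_r.
  - by rewrite shm_id id_l -compA' Hu2 id_r.
have [f0 Hf0] := shm_full (w \co u).
pose sk := - f0.
pose Psik := u' \co v.
have Dk : dist sk h Psik.
  by apply/rot; rewrite /sk shmN opprK Hf0.
have DK1 := proj1 (rot _ _ _) Dk.
have HPsik : Psik <> 0.
  move=> P0.
  have E : Psik \co idm C = 0 by rewrite id_r.
  have [y Hy] := fact_in DK1 E.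
  apply: HPsi.
  by rewrite -(id_r Psi) Hy -Hh compA' compA' (dist_comp0 D1) !comp0l.
have E1 : idm C \co h = g \co inB k by rewrite id_l Hh.
have [c' [Hc1 Hc2]] := tr3 _ _ _ _ _ _ (inB k) (idm C) DK1 D1 E1.
have [c Hc] := shm_full c'.
have E2 : idm C \co g = h \co prB k by rewrite id_l -Hg.
have [d' [Hd1 Hd2]] := tr3 _ _ _ _ _ _ (prB k) (idm C) D1 DK1 E2.
have [dm Hd] := shm_full d'.
have Hcs : inB k \co sk = s \co c.
  apply: shm_inj; move: Hc2; rewrite -Hc !shm_comp compNr compNl; exact: oppr_inj.
have Hds : prB k \co s = sk \co dm.
  apply: shm_inj; move: Hd2; rewrite -Hd !shm_comp compNr compNl; exact: oppr_inj.
rewrite -Hc id_r in Hc1.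
rewrite -Hd id_r in Hd1.
pose ph1 := dm \co c - idm Ak.
have Hs1 : sk \co ph1 = 0.
  by rewrite /ph1 compBr id_r compA' -Hds -compA' -Hcs compA' HpiB id_l subrr.
have Hs2 : shm ph1 \co Psik = 0.
  by rewrite /ph1 shmB shm_comp shm_id compBl id_l -compA' Hc1 Hd1 subrr.
have E3 : (- shm sk) \co shm ph1 = 0 by rewrite compNl -shm_comp Hs1 shm0 oppr0.
have [y Hy] := fact_in (proj1 (rot _ _ _) DK1) E3.
have Hsq : ph1 \co ph1 = 0.
  apply: shm_inj; rewrite shm0 shm_comp {2}Hy compA' Hs2 comp0l //.
pose ret := (idm Ak - ph1) \co dm.
have Hret : ret \co c = idm Ak.
  have Ee : dm \co c = ph1 + idm Ak by rewrite /ph1 subrK.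
  rewrite /ret -compA' Ee compDr compBl compBl id_r id_l Hsq subr0.
  by rewrite id_r addrC subrK.
have [K1 [d1 [w1 Dc]]] := dist_ex c.
have [sg1 Hbp1] := split_mono Dc Hret.
have [K2 [d2 [w2 Db]]] := dist_ex (inB k).
have [sg2 Hbp2] := split_mono Db (HpiB k).
exists Ak, (Bs k), sk, h, Psik; split; first exact: Dk.
split; first exact: HPsik.
split; first by exists K1, c, sg1, ret, d1.
split; first by exists K2, (inB k), sg2, (prB k), d2.
exact: (HindB k).1.
Qed.
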